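(* Let $c\in\mathbb{R}\setminus\{0\}$ and let $\mathbf f_c:\mathbb{R}^2\to\mathbb{R}^2$ be $$\mathbf f_c(u,v)=\bigl(-3u^2-cv,\ -3v^2-cu\bigr).$$ Let $\mathbf s=(s_1,s_2)$ be a point such that $\mathbf f_c(\mathbf x)=\mathbf s$ has exactly four distinct solutions $\mathbf x_i=(u_i,v_i)\in\mathbb{R}^2$, $i=1,\dots,4$, each with $\det(\mathrm{Jac}\,\mathbf f_c)(\mathbf x_i)\neq0$. Then, with $\mathfrak M_i=1/\det(\mathrm{Jac}\,\mathbf f_c)(\mathbf x_i)=\frac{1}{36u_iv_i-c^2}$, $$\mathfrak M_1+\mathfrak M_2+\mathfrak M_3+\mathfrak M_4=0.$$
   Context: $\mathbf f_c$ is the generic local form of a one-parameter family of maps between planes near a hyperbolic umbilic singularity; it is induced by the family of functions $F_{c,\mathbf s}(u,v)=s_1u+s_2v+cuv+u^3+v^3$. The points $\mathbf s$ with four preimages form the four-image region of $\mathbf f_c$. *)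

(* Defs.v *)
From Stdlib Require Import Reals Lra.
Open Scope R_scope.

Definition fc (c : R) (x : R * R) : R * R :=
  let (u, v) := x in (-3 * u ^ 2 - c * v, -3 * v ^ 2 - c * u).

(* Determinant of the Jacobian matrix of f_c at (u,v):
   the matrix of partial derivatives is [[-6u, -c], [-c, -6v]]. *)
Definition jac_det (c : R) (x : R * R) : R :=
  let (u, v) := x in (-6 * u) * (-6 * v) - (-c) * (-c).

(* Main.v *)
Require Import Defs.
From Stdlib Require Import Reals Lra.
Open Scope R_scope.

Lemma rel (c u v s1 s2 : R) : -3*u^2 - c*v = s1 -> -3*v^2 - c*u = s2 ->
  3*(s1+3*u^2)^2 + c^3*u = -(c^2*s2).
Proof. intros; subst; ring. Qed.

Lemma dd1 (c s1 a b : R) : a <> b ->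
  3*(s1+3*a^2)^2 + c^3*a = 3*(s1+3*b^2)^2 + c^3*b ->
  27*(a^3+a^2*b+a*b^2+b^3) + 18*s1*(a+b) + c^3 = 0.
Proof.
  intros H E.
  assert (Z : (a-b)*(27*(a^3+a^2*b+a*b^2+b^3) + 18*s1*(a+b) + c^3) = 0) by (rewrite Rmult_comm; nra).
  destruct (Rmult_integral _ _ Z); [exfalso; apply H; lra| auto].
Qed.

Lemma dd2 (c s1 a b d : R) : b <> d ->
  27*(a^3+a^2*b+a*b^2+b^3) + 18*s1*(a+b) + c^3 = 0 ->
  27*(a^3+a^2*d+a*d^2+d^3) + 18*s1*(a+d) + c^3 = 0 ->
  27*(a^2+b^2+d^2+a*b+a*d+b*d) + 18*s1 = 0.
Proof.
  intros H E1 E2.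
  assert (Z : (b-d)*(27*(a^2+b^2+d^2+a*b+a*d+b*d) + 18*s1) = 0).
  { replace ((b-d)*(27*(a^2+b^2+d^2+a*b+a*d+b*d) + 18*s1)) with
      ((27*(a^3+a^2*b+a*b^2+b^3) + 18*s1*(a+b) + c^3) -
       (27*(a^3+a^2*d+a*d^2+d^3) + 18*s1*(a+d) + c^3)) by ring.
    rewrite E1, E2; ring. }
  destruct (Rmult_integral _ _ Z); [exfalso; apply H; lra| auto].
Qed.

Lemma dd3 (s1 a b d e : R) : d <> e ->
  27*(a^2+b^2+d^2+a*b+a*d+b*d) + 18*s1 = 0 ->
  27*(a^2+b^2+e^2+a*b+a*e+b*e) + 18*s1 = 0 ->
  a+b+d+e = 0.
Proof.
  intros H E1 E2.
  assert (Z : (d-e)*(27*(a+b+d+e)) = 0).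
  { replace ((d-e)*(27*(a+b+d+e))) with
      ((27*(a^2+b^2+d^2+a*b+a*d+b*d) + 18*s1) -
       (27*(a^2+b^2+e^2+a*b+a*e+b*e) + 18*s1)) by ring.
    rewrite E1, E2; ring. }
  destruct (Rmult_integral _ _ Z); [exfalso; apply H; lra| lra].
Qed.

Lemma udist (c u v u' v' s1 : R) : c <> 0 -> (u, v) <> (u', v') ->
  -3*u^2 - c*v = s1 -> -3*u'^2 - c*v' = s1 -> u <> u'.
Proof.
  intros hc H E1 E2 Hu. subst u'. apply H.
  assert (c*(v - v') = 0) by lra.
  destruct (Rmult_integral _ _ H0); [contradiction|].
  f_equal; lra.
Qed.

Theorem theorem1 (c : R) (hc : c <> 0) (s : R * R)
  (x1 x2 x3 x4 : R * R)
  (hd12 : x1 <> x2) (hd13 : x1 <> x3) (hd14 : x1 <> x4)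
  (hd23 : x2 <> x3) (hd24 : x2 <> x4) (hd34 : x3 <> x4)
  (hs1 : fc c x1 = s) (hs2 : fc c x2 = s) (hs3 : fc c x3 = s) (hs4 : fc c x4 = s)
  (hall : forall x : R * R, fc c x = s -> x = x1 \/ x = x2 \/ x = x3 \/ x = x4)
  (hj1 : jac_det c x1 <> 0) (hj2 : jac_det c x2 <> 0)
  (hj3 : jac_det c x3 <> 0) (hj4 : jac_det c x4 <> 0) :
  / jac_det c x1 + / jac_det c x2 + / jac_det c x3 + / jac_det c x4 = 0.
Proof.
  clear hall.
  destruct s as [s1 s2], x1 as [u1 v1], x2 as [u2 v2], x3 as [u3 v3], x4 as [u4 v4].
  unfold fc in *. unfold jac_det in *.
  injection hs1 as A1 B1. injection hs2 as A2 B2.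
  injection hs3 as A3 B3. injection hs4 as A4 B4.
  pose proof (rel _ _ _ _ _ A1 B1) as R1.
  pose proof (rel _ _ _ _ _ A2 B2) as R2.
  pose proof (rel _ _ _ _ _ A3 B3) as R3.
  pose proof (rel _ _ _ _ _ A4 B4) as R4.
  pose proof (udist _ _ _ _ _ _ hc hd12 A1 A2) as n12.
  pose proof (udist _ _ _ _ _ _ hc hd13 A1 A3) as n13.
  pose proof (udist _ _ _ _ _ _ hc hd14 A1 A4) as n14.
  pose proof (udist _ _ _ _ _ _ hc hd23 A2 A3) as n23.
  pose proof (udist _ _ _ _ _ _ hc hd24 A2 A4) as n24.
  pose proof (udist _ _ _ _ _ _ hc hd34 A3 A4) as n34.
  assert (E12 := dd1 c s1 u1 u2 n12 ltac:(lra)).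
  assert (E13 := dd1 c s1 u1 u3 n13 ltac:(lra)).
  assert (E14 := dd1 c s1 u1 u4 n14 ltac:(lra)).
  assert (F123 := dd2 c s1 u1 u2 u3 n23 E12 E13).
  assert (F124 := dd2 c s1 u1 u2 u4 n24 E12 E14).
  assert (G := dd3 s1 u1 u2 u3 u4 n34 F123 F124).
  assert (Hu4 : u4 = -(u1+u2+u3)) by lra.
  assert (Hs : s1 = -(27/18)*(u1^2+u2^2+u3^2+u1*u2+u1*u3+u2*u3)) by lra.
  assert (Hc3 : c^3 = -27*(u1^3+u1^2*u2+u1*u2^2+u2^3) - 18*s1*(u1+u2)) by lra.
  assert (C1 : c*v1 = -3*u1^2 - s1) by lra.
  assert (C2 : c*v2 = -3*u2^2 - s1) by lra.
  assert (C3 : c*v3 = -3*u3^2 - s1) by lra.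
  assert (C4 : c*v4 = -3*u4^2 - s1) by lra.
  assert (J1 : (-6*u1)*(-6*v1) - (-c)*(-c) = -27*((u1-u2)*(u1-u3)*(u1-u4))/c).
  { replace ((-6*u1)*(-6*v1) - (-c)*(-c)) with ((36*u1*(c*v1) - c^3)/c) by (field; auto).
    rewrite C1, Hc3. try rewrite Hu4. rewrite Hs. field. auto. }
  assert (J2 : (-6*u2)*(-6*v2) - (-c)*(-c) = -27*((u2-u1)*(u2-u3)*(u2-u4))/c).
  { replace ((-6*u2)*(-6*v2) - (-c)*(-c)) with ((36*u2*(c*v2) - c^3)/c) by (field; auto).
    rewrite C2, Hc3. try rewrite Hu4. rewrite Hs. field. auto. }
  assert (J3 : (-6*u3)*(-6*v3) - (-c)*(-c) = -27*((u3-u1)*(u3-u2)*(u3-u4))/c).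
  { replace ((-6*u3)*(-6*v3) - (-c)*(-c)) with ((36*u3*(c*v3) - c^3)/c) by (field; auto).
    rewrite C3, Hc3. try rewrite Hu4. rewrite Hs. field. auto. }
  assert (J4 : (-6*u4)*(-6*v4) - (-c)*(-c) = -27*((u4-u1)*(u4-u2)*(u4-u3))/c).
  { replace ((-6*u4)*(-6*v4) - (-c)*(-c)) with ((36*u4*(c*v4) - c^3)/c) by (field; auto).
    rewrite C4, Hc3. try rewrite Hu4. rewrite Hs. field. auto. }
  rewrite J1, J2, J3, J4.
  assert (m12 : u1 - u2 <> 0) by lra. assert (m13 : u1 - u3 <> 0) by lra.
  assert (m14 : u1 - u4 <> 0) by lra. assert (m23 : u2 - u3 <> 0) by lra.
  assert (m24 : u2 - u4 <> 0) by lra. assert (m34 : u3 - u4 <> 0) by lra.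
  field. repeat split; auto; lra.
Qed.
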